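(* Let $G$ be a simple graph whose edges are colored red and blue, and let $C_1$ and $C_2$ be two vertex-disjoint alternating cycles in $G$. If there is a good pair of edges between $C_1$ and $C_2$, then $G$ contains an alternating cycle whose vertex set is exactly $V(C_1)\cup V(C_2)$.
   Context: An alternating cycle (path) in a 2-edge-colored graph is a cycle (path) in which any two consecutive edges have different colors. For a vertex $v$ on an alternating cycle $C$, $v^r$ (resp. $v^b$) denotes the neighbor of $v$ on $C$ such that the edge $vv^r$ of $C$ is red (resp. $vv^b$ is blue). Given two vertex-disjoint alternating cycles $C_1,C_2$ and an edge $vw\in E(G)$ with $v\in V(C_1)$, $w\in V(C_2)$: if $vw$ is red, the pair $vw, v^rw^r$ is a good pair of edges when $v^rw^r$ is an edge of $G$ colored red (here $v^r$ taken on $C_1$, $w^r$ on $C_2$); if $vw$ is blue, the pair $vw, v^bw^b$ is a good pair of edges when $v^bw^b$ is an edge of $G$ colored blue. ''There is a good pair between $C_1$ and $C_2$'' means some such good pair of edges exists. *)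

(* Defs.v *)
From mathcomp Require Import all_boot.
Set Implicit Arguments. Unset Strict Implicit. Unset Printing Implicit Defensive.

(* A 2-edge-colouring: col x y : bool, true = red, false = blue,
   assumed symmetric on edges.
   A cycle is represented by the sequence of its vertices in cyclic order. *)

Definition simple_graph (T : finType) (e : rel T) :=
  symmetric e /\ irreflexive e.

Definition edge_coloring (T : finType) (e : rel T) (col : T -> T -> bool) :=
  forall x y, e x y -> col x y = col y x.

Definition alt_cycle (T : finType) (e : rel T) (col : T -> T -> bool)
    (c : seq T) : bool :=
  [&& uniq c, 2 < size c, cycle e c &
      all (fun x => col x (next c x) != col (next c x) (next c (next c x))) c].

(* The neighbour v^b of v on the cycle c such that the cycle edge v v^b
   has colour b (b = true: v^r, b = false: v^b). *)
Definition cnbr (T : finType) (col : T -> T -> bool) (c : seq T) (b : bool)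
    (v : T) : T :=
  if col v (next c v) == b then next c v else prev c v.

Definition good_pair (T : finType) (e : rel T) (col : T -> T -> bool)
    (c1 c2 : seq T) : Prop :=
  exists v w, [/\ v \in c1, w \in c2, e v w,
    e (cnbr col c1 (col v w) v) (cnbr col c2 (col v w) w) &
    col (cnbr col c1 (col v w) v) (cnbr col c2 (col v w) w) = col v w].

(* Main.v *)
Require Import Defs.
From mathcomp Require Import all_boot.
Set Implicit Arguments. Unset Strict Implicit.

Section Aux.
Variables (T : finType) (e : rel T) (col : T -> T -> bool).
Hypothesis Hs : simple_graph e.
Hypothesis Hc : edge_coloring e col.

Definition altc (c : seq T) (z : T) :=
  col z (next c z) != col (next c z) (next c (next c z)).

Lemma next_last (x : T) s : uniq (x :: s) -> next (x :: s) (last x s) = x.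
Proof.
move=> U; rewrite next_nth mem_last index_last //.
by rewrite nth_default.
Qed.

Lemma prev_head (x : T) s : uniq (x :: s) -> prev (x :: s) x = last x s.
Proof.
move=> U; by have := prev_next U (last x s); rewrite next_last.
Qed.

Lemma next_cat1 (x y z : T) s t : uniq (x :: s ++ y :: t) -> z \in x :: s ->
  z != last x s -> next (x :: s ++ y :: t) z = next (x :: s) z.
Proof.
move=> U zin zl.
have U1 : uniq (x :: s) by move: U; rewrite -cat_cons cat_uniq => /and3P[].
have zin' : z \in x :: s ++ y :: t by rewrite -cat_cons mem_cat zin.
rewrite !next_nth ifT // ifT // -cat_cons index_cat zin.
have : index z (x :: s) <= size s by rewrite -ltnS -[(size s).+1]/(size (x :: s)) index_mem.
rewrite leq_eqVlt => /orP[/eqP E|lt]; last by rewrite nth_cat lt.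
case/negP: zl; apply/eqP.
by rewrite -(nth_index x zin) E -[size s]/((size (x :: s)).-1) nth_last.
Qed.

Lemma next_cat_last (x y : T) s t : uniq (x :: s ++ y :: t) ->
  next (x :: s ++ y :: t) (last x s) = y.
Proof.
move=> U.
have U1 : uniq (x :: s) by move: U; rewrite -cat_cons cat_uniq => /and3P[].
have zin' : last x s \in x :: s ++ y :: t by rewrite -cat_cons mem_cat mem_last.
rewrite next_nth ifT // -cat_cons index_cat mem_last index_last //.
by rewrite nth_cat ltnn subnn.
Qed.

Lemma next_swap (x y : T) s t : uniq (x :: s ++ y :: t) ->
  next (y :: t ++ x :: s) =1 next (x :: s ++ y :: t).
Proof.
move=> U z; rewrite -[y :: t ++ x :: s]/((y :: t) ++ (x :: s)).
by rewrite -rot_size_cat next_rot.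
Qed.

Lemma uniq_swap (x y : T) s t : uniq (x :: s ++ y :: t) -> uniq (y :: t ++ x :: s).
Proof.
move=> U; rewrite -[y :: t ++ x :: s]/((y :: t) ++ (x :: s)) -rot_size_cat rot_uniq.
exact U.
Qed.

Lemma last_notin (y : T) t : uniq (y :: t) -> 2 < size (y :: t) -> last y t != y.
Proof.
case: t => [|a t] //= /andP[yn _] _; apply/eqP => E.
by case/negP: yn; rewrite -E; exact: mem_last.
Qed.

Lemma half (x y : T) s t b :
  alt_cycle e col (x :: s) -> alt_cycle e col (y :: t) ->
  uniq (x :: s ++ y :: t) -> e (last x s) y ->
  col (last x s) x = b -> col (last y t) y = b ->
  col (last x s) y = b -> col (last y t) x = b ->
  forall z, z \in x :: s ->
  e z (next (x :: s ++ y :: t) z) && altc (x :: s ++ y :: t) z.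
Proof.
move=> /and4P[U1 S1 C1 /allP A1] /and4P[U2 S2 C2 /allP A2] U exy c1 c2 c3 c4 z zin.
have U' := uniq_swap U.
have nyl : y != last y t by rewrite eq_sym last_notin.
have ny : next (x :: s ++ y :: t) y = next (y :: t) y.
  by rewrite -(next_swap U) next_cat1 // inE eqxx.
rewrite /altc.
have [->|zl] := eqVneq z (last x s).
  rewrite next_cat_last // exy ny /=.
  have := A2 (last y t) (mem_last _ _); rewrite next_last // c3 c2.
  done.
rewrite next_cat1 //.
have n1in : next (x :: s) z \in x :: s by rewrite mem_next.
rewrite (next_cycle C1 zin) andTb.
have [E|nl] := eqVneq (next (x :: s) z) (last x s).
  rewrite E next_cat_last // c3.
  have := A1 z zin; rewrite E next_last // c1 //.
rewrite next_cat1 //; exact: A1.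
Qed.

Lemma core (x y : T) s t b :
  alt_cycle e col (x :: s) -> alt_cycle e col (y :: t) ->
  uniq (x :: s ++ y :: t) -> e (last x s) y -> e (last y t) x ->
  col (last x s) x = b -> col (last y t) y = b ->
  col (last x s) y = b -> col (last y t) x = b ->
  alt_cycle e col (x :: s ++ y :: t).
Proof.
move=> A1 A2 U e1 e2 c1 c2 c3 c4.
have H1 := half A1 A2 U e1 c1 c2 c3 c4.
have H2 := half A2 A1 (uniq_swap U) e2 c2 c1 c4 c3.
have H z : z \in x :: s ++ y :: t ->
    e z (next (x :: s ++ y :: t) z) && altc (x :: s ++ y :: t) z.
  rewrite -cat_cons mem_cat => /orP[zi|zi]; first exact: H1.
  have := H2 z zi; rewrite /altc !(next_swap U) //.
apply/and4P; split => //.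
- by case/and4P: A1 => _ S1 _ _; rewrite /= size_cat /= ltnS (leq_trans _ (leq_addr _ _)) // -ltnS.
- by apply: cycle_from_next => // z /H /andP[].
- by apply/allP => z /H /andP[].
Qed.

Lemma alt_rot (c : seq T) i : alt_cycle e col c -> alt_cycle e col (rot i c).
Proof.
move=> /and4P[U S C /allP A]; apply/and4P; split.
- by rewrite rot_uniq.
- by rewrite size_rot.
- by rewrite rot_cycle.
apply/allP => z; rewrite mem_rot => zi; rewrite !next_rot //; exact: A.
Qed.

Lemma alt_rev (c : seq T) : alt_cycle e col c -> alt_cycle e col (rev c).
Proof.
case: Hs => sym _.
move=> /and4P[U S C /allP A]; apply/and4P; split.
- by rewrite rev_uniq.
- by rewrite size_rev.
- rewrite rev_cycle; apply: sub_cycle C => a b' /=; by rewrite sym.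
apply/allP => z; rewrite mem_rev => zi; rewrite !next_rev //.
have pzi : prev c z \in c by rewrite mem_prev.
have ppzi : prev c (prev c z) \in c by rewrite mem_prev.
have := A _ ppzi; rewrite !next_prev //.
rewrite [col (prev c (prev c z)) _]Hc; last exact: (prev_cycle C pzi).
rewrite [col (prev c z) z]Hc; last exact: (prev_cycle C zi).
by rewrite eq_sym.
Qed.

Lemma rep (c : seq T) a a' : alt_cycle e col c -> a \in c ->
  (a' == prev c a) || (a' == next c a) ->
  exists s, [/\ alt_cycle e col (a :: s), (a :: s) =i c & last a s = a'].
Proof.
have P (d : seq T) : alt_cycle e col d -> a \in d -> a' = prev d a ->
    exists s, [/\ alt_cycle e col (a :: s), (a :: s) =i d & last a s = a'].
  move=> Ad ad ->; case: (rot_to ad) => i s E.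
  have Ar := alt_rot i Ad; rewrite E in Ar.
  exists s; split => //.
    by move=> z; rewrite -E mem_rot.
  case/and4P: Ar => Ur _ _ _.
  by rewrite -prev_head // -E prev_rot //; case/and4P: Ad.
move=> Ac ac /orP[/eqP E|/eqP E]; first exact: P.
have Ur : uniq c by case/and4P: Ac.
have [s [As Ms Ls]] : exists s, [/\ alt_cycle e col (a :: s), (a :: s) =i rev c & last a s = a'].
  apply: P; first exact: alt_rev.
    by rewrite mem_rev.
  by rewrite prev_rev.
by exists s; split => // z; rewrite Ms mem_rev.
Qed.

Lemma cnbr_prop (c : seq T) b u : alt_cycle e col c -> u \in c ->
  [&& (cnbr col c b u == prev c u) || (cnbr col c b u == next c u),
      col u (cnbr col c b u) == b & e u (cnbr col c b u)].
Proof.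
case: Hs => sym _.
move=> /and4P[U S C /allP A] ui; rewrite /cnbr.
case: ifP => [->|nb]; first by rewrite eqxx orbT (next_cycle C ui).
have pui : prev c u \in c by rewrite mem_prev.
have epu := prev_cycle C ui.
rewrite eqxx /= sym epu andbT -Hc //.
have := A _ pui; rewrite next_prev //.
by case: (col u (next c u)) nb; case: b; case: (col (prev c u) u).
Qed.

End Aux.

Theorem proposition3p1 (T : finType) (e : rel T) (col : T -> T -> bool)
  (c1 c2 : seq T) :
  simple_graph e -> edge_coloring e col ->
  alt_cycle e col c1 -> alt_cycle e col c2 ->
  [disjoint c1 & c2] ->
  good_pair e col c1 c2 ->
  exists c : seq T, alt_cycle e col c /\ c =i c1 ++ c2.
Proof.
move=> Hs Hc A1 A2 D [v [w [vi wi evw ev'w' cv'w']]].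
set b := col v w in ev'w' cv'w'.
have sym := proj1 Hs.
have /and3P[pv /eqP cvv' evv'] := cnbr_prop Hs Hc b A1 vi.
have /and3P[pw /eqP cww' eww'] := cnbr_prop Hs Hc b A2 wi.
move: ev'w' cv'w' pv cvv' evv' pw cww' eww'.
move: (cnbr col c1 b v) (cnbr col c2 b w) => v' w' ev'w' cv'w' pv cvv' evv' pw cww' eww'.
have U2 : uniq c2 by case/and4P: A2.
have w'i : w' \in c2 by case/orP: pw => /eqP ->; rewrite ?mem_prev ?mem_next.
have pw2 : (w == prev c2 w') || (w == next c2 w').
  case/orP: pw => /eqP ->; first by rewrite next_prev // eqxx orbT.
  by rewrite prev_next // eqxx.
have [s [As Ms Ls]] := rep Hs Hc A1 vi pv.
have [t [At Mt Lt]] := rep Hs Hc A2 w'i pw2.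
have U : uniq (v :: s ++ w' :: t).
  rewrite -cat_cons cat_uniq; apply/and3P; split.
  - by case/and4P: As.
  - apply/hasP => -[z]; rewrite Mt Ms => zi2 zi1.
    by rewrite (disjointFr D zi1) in zi2.
  - by case/and4P: At.
exists (v :: s ++ w' :: t); split.
  apply: (core (b := b) As At U); rewrite ?Ls ?Lt //.
  - by rewrite sym.
  - by rewrite Hc // sym.
  - by rewrite /b Hc // sym.
by move=> z; rewrite -cat_cons !mem_cat Ms Mt.
Qed.
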